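(* Suppose there is $x_0\in\mathbb{R}$ such that $k^2$ is continuous, nonincreasing on $(-\infty,x_0]$ and nondecreasing on $[x_0,\infty)$, with minimum value $k^2_{\min}=k^2(x_0)$ (which may be negative). Let $\Delta>0$ satisfy $k^2_{\min}\le\Delta^2\le\min\{k_{+\infty}^2,k_{-\infty}^2\}$. Then $$T\ \ge\ \mathrm{sech}^2\left\{\frac12\ln\frac{k_{+\infty}k_{-\infty}}{\Delta^2}+\frac{1}{2\Delta}\int_{\{x:\,k^2(x)<\Delta^2\}}\big(\Delta^2-k^2\big)\,\mathrm{d}x\right\}.$$
   Context: Standing setup: $k^2:\mathbb{R}\to\mathbb{R}$ is a piecewise continuous function (it may be negative somewhere) with $k^2(x)\to k_{\pm\infty}^2$ as $x\to\pm\infty$, where $k_{\pm\infty}>0$ and $k^2-k_{\pm\infty}^2$ is integrable near $\pm\infty$. For the equation $u''+k^2(x)u=0$ there is a solution with $u(x)=e^{ik_{-\infty}x}+r\,e^{-ik_{-\infty}x}+o(1)$ as $x\to-\infty$ and $u(x)=\tau\,e^{ik_{+\infty}x}+o(1)$ as $x\to+\infty$; the transmission probability is $T=(k_{+\infty}/k_{-\infty})|\tau|^2$. Here $\mathrm{sech}=1/\cosh$. *)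

(* Defs.v *)
From Stdlib Require Import Reals Lra.
Open Scope R_scope.

Definition sech (x : R) : R := / cosh x.

Definition is_integral (f : R -> R) (a b v : R) : Prop :=
  exists pr : Riemann_integrable f a b, RiemannInt pr = v.

Definition tends_pinf (f : R -> R) (l : R) : Prop :=
  forall eps, 0 < eps -> exists M, forall x, M <= x -> Rabs (f x - l) < eps.
Definition tends_minf (f : R -> R) (l : R) : Prop :=
  forall eps, 0 < eps -> exists M, forall x, x <= M -> Rabs (f x - l) < eps.

Definition integrable_near_pinf (g : R -> R) : Prop :=
  exists M L, forall eps, 0 < eps -> exists N, forall b, N <= b ->
    exists v, is_integral (fun x => Rabs (g x)) M b v /\ Rabs (v - L) < eps.
Definition integrable_near_minf (g : R -> R) : Prop :=
  exists M L, forall eps, 0 < eps -> exists N, forall a, a <= N ->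
    exists v, is_integral (fun x => Rabs (g x)) a M v /\ Rabs (v - L) < eps.

Definition improper_integral_R (f : R -> R) (I : R) : Prop :=
  forall eps, 0 < eps -> exists M, forall a b, a <= - M -> M <= b ->
    exists v, is_integral f a b v /\ Rabs (v - I) < eps.

(* the integrand (Delta^2 - k^2) restricted to the set {x : k^2(x) < Delta^2} *)
Definition below_part (k2 : R -> R) (D2 : R) (x : R) : R :=
  if Rlt_dec (k2 x) D2 then D2 - k2 x else 0.

(* Main.v *)
Require Import Defs.
From Stdlib Require Import Reals Lra Psatz Ranalysis1 MVT RiemannInt Rpower Sqrt_reg FunctionalExtensionality Classical.
Open Scope R_scope.


Lemma dpl_ext f g x l l' : (forall y, f y = g y) -> l = l' -> derivable_pt_lim f x l -> derivable_pt_lim g x l'.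
Proof. intros H -> D. replace g with f by (apply functional_extensionality; auto). exact D. Qed.

Lemma dpl_plus f g x a b : derivable_pt_lim f x a -> derivable_pt_lim g x b -> derivable_pt_lim (fun y => f y + g y) x (a+b).
Proof. intros H1 H2; exact (derivable_pt_lim_plus f g x a b H1 H2). Qed.
Lemma dpl_minus f g x a b : derivable_pt_lim f x a -> derivable_pt_lim g x b -> derivable_pt_lim (fun y => f y - g y) x (a-b).
Proof. intros H1 H2; exact (derivable_pt_lim_minus f g x a b H1 H2). Qed.
Lemma dpl_mult f g x a b : derivable_pt_lim f x a -> derivable_pt_lim g x b -> derivable_pt_lim (fun y => f y * g y) x (a * g x + f x * b).
Proof. intros H1 H2. eapply dpl_ext; [| |exact (derivable_pt_lim_mult f g x a b H1 H2)]; intros; reflexivity. Qed.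
Lemma dpl_const c x : derivable_pt_lim (fun _ => c) x 0.
Proof. exact (derivable_pt_lim_const c x). Qed.
Lemma dpl_id x : derivable_pt_lim (fun y => y) x 1.
Proof. exact (derivable_pt_lim_id x). Qed.
Lemma dpl_comp f g x a b : derivable_pt_lim f x a -> derivable_pt_lim g (f x) b -> derivable_pt_lim (fun y => g (f y)) x (b * a).
Proof. intros H1 H2; exact (derivable_pt_lim_comp f g x a b H1 H2). Qed.
Lemma dpl_sqrt f x a : 0 < f x -> derivable_pt_lim f x a -> derivable_pt_lim (fun y => sqrt (f y)) x (a / (2 * sqrt (f x))).
Proof. intros Hp H. eapply dpl_ext; [intro; reflexivity| |apply dpl_comp; [exact H| apply derivable_pt_lim_sqrt; exact Hp]].
 unfold Rdiv; ring. Qed.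
Lemma dpl_ln f x a : 0 < f x -> derivable_pt_lim f x a -> derivable_pt_lim (fun y => ln (f y)) x (a / f x).
Proof. intros Hp H. eapply dpl_ext; [intro; reflexivity| |apply dpl_comp; [exact H| apply derivable_pt_lim_ln; exact Hp]].
 unfold Rdiv; ring. Qed.
Lemma dpl_cos c x : derivable_pt_lim (fun y => cos (c * y)) x (- (c * sin (c * x))).
Proof. eapply dpl_ext; [intro; reflexivity| |apply dpl_comp; [|apply derivable_pt_lim_cos]].
 2:{ eapply dpl_ext; [| |apply (dpl_mult (fun _ => c) (fun y => y)); [apply dpl_const|apply dpl_id]]; intros; simpl; reflexivity. }
 simpl; ring. Qed.
Lemma dpl_sin c x : derivable_pt_lim (fun y => sin (c * y)) x (c * cos (c * x)).
Proof. eapply dpl_ext; [intro; reflexivity| |apply dpl_comp; [|apply derivable_pt_lim_sin]].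
 2:{ eapply dpl_ext; [| |apply (dpl_mult (fun _ => c) (fun y => y)); [apply dpl_const|apply dpl_id]]; intros; simpl; reflexivity. }
 simpl; ring. Qed.


Definition Nf (u1 u2 : R -> R) x := u1 x * u1 x + u2 x * u2 x.
Definition Sf (u1 u2 du1 du2 : R -> R) x := u1 x * du1 x + u2 x * du2 x.
Definition Psi (a b s e : R) := a + b + sqrt ((a-b)*(a-b) + 4*(s*s) + e).
Definition PsiC (u1 u2 du1 du2 : R -> R) (c e x : R) :=
  Psi (Nf du1 du2 x / c) (c * Nf u1 u2 x) (Sf u1 u2 du1 du2 x) e.
Definition Qf (u1 u2 du1 du2 : R -> R) (c e x : R) :=
  (Nf du1 du2 x / c - c * Nf u1 u2 x)*(Nf du1 du2 x / c - c * Nf u1 u2 x)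
   + 4*(Sf u1 u2 du1 du2 x * Sf u1 u2 du1 du2 x) + e.

Lemma Nf_nonneg u1 u2 x : 0 <= Nf u1 u2 x.
Proof. unfold Nf; nra. Qed.

Lemma Qf_pos u1 u2 du1 du2 c e x : 0 < e -> 0 < Qf u1 u2 du1 du2 c e x.
Proof. intro; unfold Qf; pose proof (Rle_0_sqr (Nf du1 du2 x / c - c * Nf u1 u2 x)); pose proof (Rle_0_sqr (Sf u1 u2 du1 du2 x)); unfold Rsqr in *; lra. Qed.

Lemma PsiC_pos u1 u2 du1 du2 c e x : 0 < c -> 0 < e -> 0 < PsiC u1 u2 du1 du2 c e x.
Proof. intros Hc He. unfold PsiC, Psi.
 pose proof (Nf_nonneg du1 du2 x); pose proof (Nf_nonneg u1 u2 x).
 assert (0 < sqrt ((Nf du1 du2 x / c - c * Nf u1 u2 x) * (Nf du1 du2 x / c - c * Nf u1 u2 x) +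
    4 * (Sf u1 u2 du1 du2 x * Sf u1 u2 du1 du2 x) + e)) by (apply sqrt_lt_R0; apply Qf_pos; exact He).
 assert (0 <= Nf du1 du2 x / c) by (unfold Rdiv; apply Rmult_le_pos; [lra|left; apply Rinv_0_lt_compat; lra]).
 assert (0 <= c * Nf u1 u2 x) by (apply Rmult_le_pos; lra). lra. Qed.

Lemma dlnPsi k2 u1 u2 du1 du2 c e x :
  (forall x, derivable_pt_lim u1 x (du1 x)) -> (forall x, derivable_pt_lim u2 x (du2 x)) ->
  (forall x, derivable_pt_lim du1 x (- (k2 x * u1 x))) -> (forall x, derivable_pt_lim du2 x (- (k2 x * u2 x))) ->
  0 < c -> 0 < e ->
  derivable_pt_lim (fun t => ln (PsiC u1 u2 du1 du2 c e t)) x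
    (2 * Sf u1 u2 du1 du2 x * (c*c - k2 x) / (c * sqrt (Qf u1 u2 du1 du2 c e x))).
Proof.
 intros h1 h2 h3 h4 Hc He.
 assert (dN : derivable_pt_lim (Nf u1 u2) x (2 * Sf u1 u2 du1 du2 x)).
 { eapply dpl_ext; [intro; reflexivity| |apply dpl_plus; apply dpl_mult; eauto].
   unfold Sf; ring. }
 assert (dP : derivable_pt_lim (Nf du1 du2) x (-2 * k2 x * Sf u1 u2 du1 du2 x)).
 { eapply dpl_ext; [intro; reflexivity| |apply dpl_plus; apply dpl_mult; eauto].
   unfold Sf; ring. }
 assert (dS : derivable_pt_lim (Sf u1 u2 du1 du2) x (Nf du1 du2 x - k2 x * Nf u1 u2 x)).
 { eapply dpl_ext; [intro; reflexivity| |apply dpl_plus; apply dpl_mult; eauto].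
   unfold Nf; ring. }
 assert (da : derivable_pt_lim (fun t => Nf du1 du2 t / c) x (-2 * k2 x * Sf u1 u2 du1 du2 x / c)).
 { eapply dpl_ext; [| |apply (dpl_mult (Nf du1 du2) (fun _ => / c)); [exact dP|apply dpl_const]].
   intro; unfold Rdiv; reflexivity. unfold Rdiv; ring. }
 assert (db : derivable_pt_lim (fun t => c * Nf u1 u2 t) x (c * (2 * Sf u1 u2 du1 du2 x))).
 { eapply dpl_ext; [| |apply (dpl_mult (fun _ => c)); [apply dpl_const|exact dN]].
   intro; reflexivity. ring. }
 set (a := Nf du1 du2 x / c). set (b := c * Nf u1 u2 x). set (s := Sf u1 u2 du1 du2 x).
 set (K := k2 x).
 assert (dQ : derivable_pt_lim (Qf u1 u2 du1 du2 c e) x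
   (2*(a-b)*(-2*K*s/c - c*(2*s)) + 8 * s * (Nf du1 du2 x - K * Nf u1 u2 x))).
 { eapply dpl_ext; [intro; reflexivity| |].
   2:{ apply dpl_plus; [apply dpl_plus|apply dpl_const].
       - apply dpl_mult; apply dpl_minus; [exact da|exact db|exact da|exact db].
       - apply (dpl_mult (fun _ => 4)); [apply dpl_const|]. apply dpl_mult; exact dS. }
   cbv beta. fold a b s K. ring. }
 pose proof (Qf_pos u1 u2 du1 du2 c e x He) as HQ.
 pose proof (dpl_sqrt _ _ _ HQ dQ) as dq.
 assert (dPsi : derivable_pt_lim (PsiC u1 u2 du1 du2 c e) x
    (-2 * K * s / c + c * (2 * s) +
     (2*(a-b)*(-2*K*s/c - c*(2*s)) + 8 * s * (Nf du1 du2 x - K * Nf u1 u2 x)) / (2 * sqrt (Qf u1 u2 du1 du2 c e x)))).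
 { eapply dpl_ext; [intro; reflexivity| |apply dpl_plus; [apply dpl_plus; [exact da|exact db]|exact dq]].
   reflexivity. }
 pose proof (PsiC_pos u1 u2 du1 du2 c e x Hc He) as Hps.
 eapply dpl_ext; [intro; reflexivity| |apply dpl_ln; [exact Hps|exact dPsi]].
 assert (Hsq: 0 < sqrt (Qf u1 u2 du1 du2 c e x)) by (apply sqrt_lt_R0; exact HQ).
 assert (EPs : PsiC u1 u2 du1 du2 c e x = a + b + sqrt (Qf u1 u2 du1 du2 c e x)) by reflexivity.
 rewrite EPs in Hps |- *.
 set (q := sqrt (Qf u1 u2 du1 du2 c e x)) in *.
 assert (Hid : Nf du1 du2 x = c * a) by (unfold a; field; lra).
 assert (Hid2 : Nf u1 u2 x = b / c) by (unfold b; field; lra).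
 rewrite Hid, Hid2. field. split; [lra|split; lra].
Qed.


Lemma abs_2S_le u1 u2 du1 du2 c e x : 0 < e ->
  Rabs (2 * Sf u1 u2 du1 du2 x) <= sqrt (Qf u1 u2 du1 du2 c e x).
Proof. intro He. rewrite <- sqrt_Rsqr_abs. apply sqrt_le_1_alt. unfold Qf, Rsqr.
 pose proof (Rle_0_sqr (Nf du1 du2 x / c - c * Nf u1 u2 x)). unfold Rsqr in *. lra. Qed.

Lemma const_c k2 u1 u2 du1 du2 G g c e x y alpha D :
  (forall x, derivable_pt_lim u1 x (du1 x)) -> (forall x, derivable_pt_lim u2 x (du2 x)) ->
  (forall x, derivable_pt_lim du1 x (- (k2 x * u1 x))) -> (forall x, derivable_pt_lim du2 x (- (k2 x * u2 x))) ->
  (forall t, derivable_pt_lim G t (g t)) ->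
  0 < c -> 0 < e -> 0 < D -> x <= y ->
  (forall t, x <= t <= y -> Rabs (c*c - k2 t) / c <= alpha + g t / D) ->
  ln (PsiC u1 u2 du1 du2 c e x) <= ln (PsiC u1 u2 du1 du2 c e y) + alpha * (y - x) + (G y - G x) / D.
Proof.
 intros h1 h2 h3 h4 hG Hc He HD Hxy Hb.
 destruct Hxy as [Hxy| <-]; [|unfold Rdiv; ring_simplify; lra].
 set (H := fun t => ln (PsiC u1 u2 du1 du2 c e t) + alpha * t + G t * / D).
 assert (HD' : forall t, derivable_pt_lim H t
   (2 * Sf u1 u2 du1 du2 t * (c*c - k2 t) / (c * sqrt (Qf u1 u2 du1 du2 c e t)) + alpha * 1 + g t * / D)).
 { intro t. unfold H. apply dpl_plus; [apply dpl_plus|].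
   - apply (dlnPsi k2); auto.
   - eapply dpl_ext; [| |apply (dpl_mult (fun _ => alpha) (fun y => y)); [apply dpl_const|apply dpl_id]];
     [intro; reflexivity|ring].
   - eapply dpl_ext; [| |apply (dpl_mult G (fun _ => / D)); [apply hG|apply dpl_const]];
     [intro; reflexivity|ring]. }
 destruct (MVT_cor2 H _ x y Hxy (fun t _ => HD' t)) as [z [Hzr Hz]].
 assert (Hq : 0 < sqrt (Qf u1 u2 du1 du2 c e z)) by (apply sqrt_lt_R0; apply Qf_pos; exact He).
 pose proof (abs_2S_le u1 u2 du1 du2 c e z He) as HS.
 assert (Hbz := Hb z ltac:(lra)).
 set (q := sqrt (Qf u1 u2 du1 du2 c e z)) in *.
 set (S := Sf u1 u2 du1 du2 z) in *.
 set (w := c * c - k2 z) in *.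
 assert (Hw : - (Rabs w / c) <= 2 * S * w / (c * q)).
 { replace (2 * S * w / (c * q)) with ((2 * S / q) * (w / c)) by (field; lra).
   assert (Rabs (2*S/q) <= 1).
   { unfold Rdiv; rewrite Rabs_mult, Rabs_inv, (Rabs_right q) by lra.
     apply (Rmult_le_reg_r q); [lra|]. rewrite Rmult_assoc, Rinv_l by lra. lra. }
   assert (Rabs (w / c) = Rabs w / c) by (unfold Rdiv; rewrite Rabs_mult, Rabs_inv, (Rabs_right c) by lra; reflexivity).
   rewrite <- H1. set (z1 := 2*S/q) in *. set (z2 := w / c) in *.
   destruct (Rabs_def2 _ _ (Rle_lt_trans _ _ _ H0 (Rlt_plus_1 1))) as [_ _].
   pose proof (Rabs_pos z2). pose proof (Rabs_mult z1 z2). pose proof (Rle_abs (-(z1*z2))).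
   rewrite Rabs_Ropp in H4. rewrite H3 in H4.
   assert (Rabs z1 * Rabs z2 <= Rabs z2) by (pose proof (Rabs_pos z1); nra). lra. }
 assert (H z - H x >= 0 -> True) by auto.
 assert (0 <= (2 * S * w / (c * q) + alpha * 1 + g z * / D)).
 { unfold Rdiv in Hbz. unfold Rdiv in Hw. lra. }
 assert (H y - H x >= 0) by (rewrite Hzr; apply Rle_ge; apply Rmult_le_pos; lra).
 unfold H in H2. unfold Rdiv. lra.
Qed.


Lemma Psi_tri a b s e rho : 0 <= a -> 0 <= b -> 0 < e -> 1 <= rho ->
  Psi (a / rho) (rho * b) s e <= rho * Psi a b s e.
Proof.
 intros Ha Hb He Hr. unfold Psi.
 set (r := sqrt ((a - b) * (a - b) + 4 * (s * s) + e)).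
 set (r' := sqrt ((a / rho - rho * b) * (a / rho - rho * b) + 4 * (s * s) + e)).
 assert (Hr2 : r * r = (a - b) * (a - b) + 4 * (s * s) + e) by (apply sqrt_sqrt; pose proof (Rle_0_sqr (a-b)); pose proof (Rle_0_sqr s); unfold Rsqr in *; lra).
 assert (Hr'2 : r' * r' = (a / rho - rho * b) * (a / rho - rho * b) + 4 * (s * s) + e) by (apply sqrt_sqrt; pose proof (Rle_0_sqr (a / rho - rho * b)); pose proof (Rle_0_sqr s); unfold Rsqr in *; lra).
 assert (Hr0 : 0 <= r) by apply sqrt_pos. assert (Hr'0 : 0 <= r') by apply sqrt_pos.
 assert (Hrab : a - b + r >= 0).
 { destruct (Rle_dec (b - a) 0); [lra|]. assert (b - a <= r); [|lra].
   apply Rsqr_incr_0_var; [unfold Rsqr; nra| lra]. }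
 set (m := a * (rho - / rho)).
 assert (Hm : 0 <= m).
 { unfold m. apply Rmult_le_pos; [lra|]. assert (/ rho <= 1). { rewrite <- Rinv_1. apply Rinv_le_contravar; lra. } lra. }
 assert (HA : a / rho + rho * b = rho * (a + b) - m) by (unfold m; field; lra).
 rewrite HA.
 assert (r' <= m + rho * r); [|nra].
 apply Rsqr_incr_0_var; [|nra]. unfold Rsqr. rewrite Hr'2.
 assert (Hkey : (m + rho*r)*(m + rho*r) - ((a / rho - rho * b) * (a / rho - rho * b) + 4 * (s * s) + e)
    = (rho*rho - 1) * ((a+b) + r) * (a - b + r)).
 { transitivity ((m + rho*r)*(m + rho*r) - ((a / rho - rho * b) * (a / rho - rho * b)) - (r*r - (a-b)*(a-b))).
   rewrite Hr2; ring. unfold m; field; lra. }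
 assert (0 <= (rho*rho - 1) * ((a+b) + r) * (a - b + r)).
 { apply Rmult_le_pos; [apply Rmult_le_pos|]; nra. }
 lra.
Qed.

Lemma PsiC_tri u1 u2 du1 du2 c d e x : 0 < d -> d <= c -> 0 < e ->
  PsiC u1 u2 du1 du2 c e x <= (c / d) * PsiC u1 u2 du1 du2 d e x.
Proof.
 intros Hd Hdc He. unfold PsiC.
 replace (Nf du1 du2 x / c) with ((Nf du1 du2 x / d) / (c / d)) by (field; lra).
 replace (c * Nf u1 u2 x) with ((c / d) * (d * Nf u1 u2 x)) by (field; lra).
 apply Psi_tri; auto.
 - unfold Rdiv; apply Rmult_le_pos; [apply Nf_nonneg|left; apply Rinv_0_lt_compat; lra].
 - apply Rmult_le_pos; [lra|apply Nf_nonneg].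
 - apply (Rmult_le_reg_r d); [lra|]. unfold Rdiv. rewrite Rmult_assoc, Rinv_l; lra.
Qed.


Lemma dpl_local f g x l d : 0 < d -> (forall y, Rabs (y - x) < d -> f y = g y) ->
  derivable_pt_lim f x l -> derivable_pt_lim g x l.
Proof.
 intros Hd Heq H eps Heps. destruct (H eps Heps) as [del Hdel].
 assert (Hm : 0 < Rmin del d) by (apply Rmin_pos; [apply cond_pos|lra]).
 exists (mkposreal _ Hm). intros h hne hlt. simpl in hlt.
 rewrite <- (Heq (x + h)), <- (Heq x).
 - apply Hdel; auto. apply (Rlt_le_trans _ _ _ hlt), Rmin_l.
 - unfold Rminus; rewrite Rplus_opp_r, Rabs_R0; lra.
 - replace (x + h - x) with h by ring. apply (Rlt_le_trans _ _ _ hlt), Rmin_r.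
Qed.

Definition pr_all (g : R -> R) (Hc : continuity g) (a b : R) : Riemann_integrable g a b :=
  match Rle_dec a b with
  | left h => @continuity_implies_RiemannInt g a b h (fun x _ => Hc x)
  | right h => RiemannInt_P1 (@continuity_implies_RiemannInt g b a (Rlt_le _ _ (Rnot_le_lt _ _ h)) (fun x _ => Hc x))
  end.

Lemma prim_exists (g : R -> R) : continuity g ->
  exists G, (forall t, derivable_pt_lim G t (g t)) /\ (forall a b, is_integral g a b (G b - G a)).
Proof.
 intro Hc. exists (fun x => RiemannInt (pr_all g Hc 0 x)).
 assert (Hch : forall a b, RiemannInt (pr_all g Hc a b) = RiemannInt (pr_all g Hc 0 b) - RiemannInt (pr_all g Hc 0 a)).
 { intros a b. pose proof (RiemannInt_P26 (pr_all g Hc 0 a) (pr_all g Hc a b) (pr_all g Hc 0 b)). lra. }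
 split.
 - intro t.
   assert (h : t - 1 <= t + 1) by lra.
   assert (C0 : forall x, t - 1 <= x <= t + 1 -> continuity_pt g x) by (intros; apply Hc).
   assert (Ht : t - 1 <= t <= t + 1) by lra.
   pose proof (RiemannInt_P28 h C0 Ht) as HP.
   apply (dpl_local (fun y => primitive h (FTC_P1 h C0) y + RiemannInt (pr_all g Hc 0 (t-1))) _ _ _ 1 Rlt_0_1).
   + intros y Hy. unfold primitive.
     destruct (Rle_dec (t-1) y) as [r1|r1]; [|apply Rabs_def2 in Hy; lra].
     destruct (Rle_dec y (t+1)) as [r2|r2]; [|apply Rabs_def2 in Hy; lra].
     rewrite (RiemannInt_P5 (FTC_P1 h C0 r1 r2) (pr_all g Hc (t-1) y)). rewrite Hch. ring.
   + eapply dpl_ext; [intro; reflexivity| |apply dpl_plus; [exact HP|apply dpl_const]]. ring.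
 - intros a b. exists (pr_all g Hc a b). apply Hch.
Qed.


Lemma iter_mono (F m : R -> R) a b : a <= b ->
  (forall x y, a <= x <= y -> y <= b -> m x <= m y) ->
  (forall x y, a <= x <= y -> y <= b -> F x <= F y + (y - x) * (m y - m x)) ->
  F a <= F b.
Proof.
 intros Hab Hm Hs.
 assert (Hn : forall n : nat, (0 < n)%nat -> F a <= F b + ((b - a) / INR n) * (m b - m a)).
 { intros n Hn. assert (HnR : 0 < INR n) by (apply lt_0_INR; exact Hn).
   set (h := (b - a) / INR n).
   assert (Hh : 0 <= h) by (unfold h, Rdiv; apply Rmult_le_pos; [lra|left; apply Rinv_0_lt_compat; lra]).
   assert (Hb : a + INR n * h = b) by (unfold h; field; lra).
   assert (Hj : forall j, (j <= n)%nat -> F a <= F (a + INR j * h) + h * (m (a + INR j * h) - m a)).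
   { induction j as [|j IH]; intro Hj.
     - simpl. replace (a + 0 * h) with a by ring. lra.
     - assert (Hjn : INR (S j) <= INR n) by (apply le_INR; exact Hj).
       rewrite S_INR in *.
       assert (IH' := IH ltac:(lia)).
       assert (HjR : 0 <= INR j) by apply pos_INR.
       assert (H1 : a <= a + INR j * h <= a + (INR j + 1) * h) by nra.
       assert (H2 : a + (INR j + 1) * h <= b) by nra.
       pose proof (Hs _ _ H1 H2) as Hst.
       replace (a + (INR j + 1) * h - (a + INR j * h)) with h in Hst by ring.
       lra. }
   pose proof (Hj n (le_n n)) as Hfin. rewrite Hb in Hfin. exact Hfin. }
 destruct (Rle_dec (F a) (F b)) as [|Hc]; [assumption|exfalso].
 assert (Hd : 0 < F a - F b) by lra.
 assert (Hmm : 0 <= m b - m a) by (assert (H := Hm a b); lra).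
 destruct (INR_unbounded ((b - a) * (m b - m a) / (F a - F b))) as [n Hn1].
 assert (HnR : 0 < INR n).
 { assert (0 <= (b - a) * (m b - m a) / (F a - F b)) by (unfold Rdiv; apply Rmult_le_pos; [nra|left; apply Rinv_0_lt_compat; lra]). lra. }
 assert (Hn0 : (0 < n)%nat) by (apply INR_lt; simpl; lra).
 pose proof (Hn _ Hn0) as HH.
 assert (((b - a) / INR n) * (m b - m a) < F a - F b); [|lra].
 replace ((b - a) / INR n * (m b - m a)) with (((b - a) * (m b - m a)) / INR n) by (field; lra).
 apply (Rmult_lt_reg_r (INR n)); [lra|]. unfold Rdiv; rewrite Rmult_assoc, Rinv_l by lra.
 apply (Rmult_lt_reg_r (/ (F a - F b))); [apply Rinv_0_lt_compat; lra|].
 rewrite Rmult_1_r. replace ((F a - F b) * INR n * / (F a - F b)) with (INR n) by (field; lra).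
 unfold Rdiv in Hn1; lra.
Qed.


Lemma Psi_sym a b s e : Psi a b s e = Psi b a s e.
Proof. unfold Psi. replace ((b - a) * (b - a)) with ((a - b) * (a - b)) by ring. ring. Qed.

Lemma PsiC_tri2 u1 u2 du1 du2 c d e x : 0 < d -> d <= c -> 0 < e ->
  PsiC u1 u2 du1 du2 d e x <= (c / d) * PsiC u1 u2 du1 du2 c e x.
Proof.
 intros Hd Hdc He. unfold PsiC.
 rewrite (Psi_sym (Nf du1 du2 x / d)), (Psi_sym (Nf du1 du2 x / c)).
 replace (d * Nf u1 u2 x) with ((c * Nf u1 u2 x) / (c / d)) by (field; lra).
 replace (Nf du1 du2 x / d) with ((c / d) * (Nf du1 du2 x / c)) by (field; lra).
 apply Psi_tri; auto.
 - apply Rmult_le_pos; [lra|apply Nf_nonneg].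
 - unfold Rdiv; apply Rmult_le_pos; [apply Nf_nonneg|left; apply Rinv_0_lt_compat; lra].
 - apply (Rmult_le_reg_r d); [lra|]. unfold Rdiv. rewrite Rmult_assoc, Rinv_l; lra.
Qed.

Definition phi (k2 : R -> R) (D : R) x := sqrt (Rmax (k2 x) (D * D)).

Lemma phi_sq k2 D x : phi k2 D x * phi k2 D x = Rmax (k2 x) (D*D).
Proof. unfold phi. apply sqrt_sqrt. apply (Rle_trans _ (D*D)); [nra|apply Rmax_r]. Qed.

Lemma phi_ge k2 D x : 0 < D -> D <= phi k2 D x.
Proof. intro. unfold phi. rewrite <- (sqrt_square D) at 1 by lra. apply sqrt_le_1_alt. apply Rmax_r. Qed.

Lemma phi_mono k2 D x y : 0 < D -> k2 x <= k2 y -> phi k2 D x <= phi k2 D y.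
Proof. intros. unfold phi. apply sqrt_le_1_alt. unfold Rmax. repeat destruct Rle_dec; lra. Qed.

Lemma bound_lem c d D K B : 0 < D -> D <= d -> d <= c -> d*d <= Rmax K (D*D) -> Rmax K (D*D) <= c*c ->
  B = (if Rlt_dec K (D*D) then D*D - K else 0) ->
  Rabs (c*c - K) / c <= (c*c - d*d)/D + B / D.
Proof.
 intros HD Hd Hc H1 H2 HB. unfold Rmax in *. subst B.
 destruct (Rlt_dec K (D*D)) as [Hl|Hl]; destruct (Rle_dec K (D*D)) as [Hl'|Hl']; try lra.
 - rewrite Rabs_right by nra.
   apply (Rle_trans _ ((c*c - d*d)/c + (D*D-K)/c)).
   + unfold Rdiv. rewrite <- Rmult_plus_distr_r. apply Rmult_le_compat_r; [left; apply Rinv_0_lt_compat; lra|nra].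
   + apply Rplus_le_compat; unfold Rdiv; apply Rmult_le_compat_l; try nra;
     apply Rinv_le_contravar; lra.
 - assert (K = D*D) by lra. subst K. rewrite Rabs_right by nra.
   unfold Rdiv. rewrite Rmult_0_l, Rplus_0_r. apply Rmult_le_compat; try nra.
   left; apply Rinv_0_lt_compat; lra. apply Rinv_le_contravar; lra.
 - rewrite Rabs_right by nra.
   unfold Rdiv. rewrite Rmult_0_l, Rplus_0_r. apply Rmult_le_compat; try nra.
   left; apply Rinv_0_lt_compat; lra. apply Rinv_le_contravar; lra.
Qed.


Lemma ln_le' x y : 0 < x -> x <= y -> ln x <= ln y.
Proof. intros H [H1| ->]; [left; apply ln_increasing; auto|lra]. Qed.

Lemma ln_tri u1 u2 du1 du2 c d e x : 0 < d -> d <= c -> 0 < e ->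
  ln (PsiC u1 u2 du1 du2 d e x) <= ln c - ln d + ln (PsiC u1 u2 du1 du2 c e x).
Proof. intros. pose proof (PsiC_tri2 u1 u2 du1 du2 c d e x H H0 H1).
 pose proof (PsiC_pos u1 u2 du1 du2 d e x H H1). pose proof (PsiC_pos u1 u2 du1 du2 c e x ltac:(lra) H1).
 eapply Rle_trans; [apply ln_le'; [lra|exact H2]|].
 unfold Rdiv. rewrite !ln_mult, ln_Rinv; repeat (first [lra | apply Rmult_lt_0_compat | apply Rinv_0_lt_compat]). Qed.

Lemma ln_tri' u1 u2 du1 du2 c d e x : 0 < d -> d <= c -> 0 < e ->
  ln (PsiC u1 u2 du1 du2 c e x) <= ln c - ln d + ln (PsiC u1 u2 du1 du2 d e x).
Proof. intros. pose proof (PsiC_tri u1 u2 du1 du2 c d e x H H0 H1).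
 pose proof (PsiC_pos u1 u2 du1 du2 d e x H H1). pose proof (PsiC_pos u1 u2 du1 du2 c e x ltac:(lra) H1).
 eapply Rle_trans; [apply ln_le'; [lra|exact H2]|].
 unfold Rdiv. rewrite !ln_mult, ln_Rinv; repeat (first [lra | apply Rmult_lt_0_compat | apply Rinv_0_lt_compat]). Qed.

Lemma Rmax_mono a b D : a <= b -> Rmax a D <= Rmax b D.
Proof. unfold Rmax; repeat destruct Rle_dec; lra. Qed.

Lemma core k2 u1 u2 du1 du2 G x0 D e p q :
  (forall x, derivable_pt_lim u1 x (du1 x)) -> (forall x, derivable_pt_lim u2 x (du2 x)) ->
  (forall x, derivable_pt_lim du1 x (- (k2 x * u1 x))) -> (forall x, derivable_pt_lim du2 x (- (k2 x * u2 x))) ->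
  (forall t, derivable_pt_lim G t (below_part k2 (D*D) t)) ->
  (forall x y, x <= y -> y <= x0 -> k2 y <= k2 x) ->
  (forall x y, x0 <= x -> x <= y -> k2 x <= k2 y) ->
  k2 x0 <= D * D -> 0 < D -> 0 < e -> p <= x0 -> x0 <= q ->
  ln (PsiC u1 u2 du1 du2 (phi k2 D p) e p) <=
  ln (PsiC u1 u2 du1 du2 (phi k2 D q) e q) + ln (phi k2 D p) + ln (phi k2 D q) - 2 * ln D + (G q - G p) / D.
Proof.
 intros h1 h2 h3 h4 hG hdec hinc Hx0 HD He Hp Hq.
 assert (Hphi0 : phi k2 D x0 = D).
 { unfold phi. rewrite Rmax_right by lra. apply sqrt_square; lra. }
 assert (HR : ln (PsiC u1 u2 du1 du2 (phi k2 D x0) e x0) + ln (phi k2 D x0) + G x0 / D <=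
              ln (PsiC u1 u2 du1 du2 (phi k2 D q) e q) + ln (phi k2 D q) + G q / D).
 { apply (iter_mono (fun x => ln (PsiC u1 u2 du1 du2 (phi k2 D x) e x) + ln (phi k2 D x) + G x / D)
                    (fun x => phi k2 D x * phi k2 D x / D)); auto.
   - intros x y [Hx Hxy] Hy. unfold Rdiv. apply Rmult_le_compat_r; [left; apply Rinv_0_lt_compat; lra|].
     rewrite !phi_sq. apply Rmax_mono, hinc; lra.
   - intros x y [Hx Hxy] Hy. cbv beta.
     set (c := phi k2 D y). set (d := phi k2 D x).
     assert (Hd : D <= d) by (apply phi_ge; lra).
     assert (Hdc : d <= c) by (apply phi_mono; [lra|apply hinc; lra]).
     pose proof (ln_tri u1 u2 du1 du2 c d e x ltac:(lra) Hdc He) as T1.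
     pose proof (const_c k2 u1 u2 du1 du2 G (below_part k2 (D*D)) c e x y ((c*c - d*d)/D) D h1 h2 h3 h4 hG
        ltac:(lra) He HD Hxy) as T2.
     assert (T2' : ln (PsiC u1 u2 du1 du2 c e x) <= ln (PsiC u1 u2 du1 du2 c e y) + (c * c - d * d) / D * (y - x) + (G y - G x) / D).
     { apply T2. intros t Ht. apply (bound_lem c d D (k2 t)); auto; try lra.
       - unfold d; rewrite phi_sq. apply Rmax_mono, hinc; lra.
       - unfold c; rewrite phi_sq. apply Rmax_mono, hinc; lra. }
     replace ((y - x) * (c * c / D - d * d / D)) with ((c*c - d*d)/D*(y-x)) by (field; lra).
     unfold Rdiv in *. lra. }
 assert (HL : ln (PsiC u1 u2 du1 du2 (phi k2 D p) e p) - ln (phi k2 D p) + G p / D <=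
              ln (PsiC u1 u2 du1 du2 (phi k2 D x0) e x0) - ln (phi k2 D x0) + G x0 / D).
 { apply (iter_mono (fun x => ln (PsiC u1 u2 du1 du2 (phi k2 D x) e x) - ln (phi k2 D x) + G x / D)
                    (fun x => - (phi k2 D x * phi k2 D x / D))); auto.
   - intros x y [Hx Hxy] Hy. apply Ropp_le_contravar. unfold Rdiv. apply Rmult_le_compat_r; [left; apply Rinv_0_lt_compat; lra|].
     rewrite !phi_sq. apply Rmax_mono, hdec; lra.
   - intros x y [Hx Hxy] Hy. cbv beta.
     set (c := phi k2 D x). set (d := phi k2 D y).
     assert (Hd : D <= d) by (apply phi_ge; lra).
     assert (Hdc : d <= c) by (apply phi_mono; [lra|apply hdec; lra]).
     pose proof (ln_tri' u1 u2 du1 du2 c d e y ltac:(lra) Hdc He) as T1.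
     pose proof (const_c k2 u1 u2 du1 du2 G (below_part k2 (D*D)) c e x y ((c*c - d*d)/D) D h1 h2 h3 h4 hG
        ltac:(lra) He HD Hxy) as T2.
     assert (T2' : ln (PsiC u1 u2 du1 du2 c e x) <= ln (PsiC u1 u2 du1 du2 c e y) + (c * c - d * d) / D * (y - x) + (G y - G x) / D).
     { apply T2. intros t Ht. apply (bound_lem c d D (k2 t)); auto; try lra.
       - unfold d; rewrite phi_sq. apply Rmax_mono, hdec; lra.
       - unfold c; rewrite phi_sq. apply Rmax_mono, hdec; lra. }
     replace ((y - x) * (- (d * d / D) - - (c * c / D))) with ((c*c - d*d)/D*(y-x)) by (field; lra).
     unfold Rdiv in *. lra. }
 rewrite Hphi0 in HR, HL. unfold Rdiv in *. lra.
Qed.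


Definition near (d : bool) M x := if d then M <= x else x <= M.
Definition tends d (f : R -> R) l := forall eps, 0 < eps -> exists M, forall x, near d M x -> Rabs (f x - l) < eps.

Lemma near2 d M1 M2 : exists M, forall x, near d M x -> near d M1 x /\ near d M2 x.
Proof. destruct d; simpl.
 - exists (Rmax M1 M2). intros x H. split; eapply Rle_trans; [apply Rmax_l|exact H|apply Rmax_r|exact H].
 - exists (Rmin M1 M2). intros x H. split; eapply Rle_trans; [exact H|apply Rmin_l|exact H|apply Rmin_r].
Qed.

Lemma tends_bound d f l : tends d f l -> exists M, forall x, near d M x -> Rabs (f x) <= Rabs l + 1.
Proof. intro H. destruct (H 1 Rlt_0_1) as [M HM]. exists M. intros x Hx. specialize (HM x Hx).
 pose proof (Rabs_triang_inv (f x) l). lra. Qed.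

Lemma landau d e e' e'' : (forall x, derivable_pt_lim e x (e' x)) -> (forall x, derivable_pt_lim e' x (e'' x)) ->
  tends d e 0 -> tends d e'' 0 -> tends d e' 0.
Proof.
 intros H1 H2 He He'' eps Heps.
 destruct (He (eps/3) ltac:(lra)) as [M1 HM1]. destruct (He'' (eps/3) ltac:(lra)) as [M2 HM2].
 destruct (near2 d M1 M2) as [M HM]. destruct d.
 - exists M. intros x Hx. simpl in Hx.
   destruct (MVT_cor2 e e' x (x+1) ltac:(lra) (fun c _ => H1 c)) as [xi [Hxi Hxir]].
   destruct (MVT_cor2 e' e'' x xi ltac:(lra) (fun c _ => H2 c)) as [eta [Heta Hetar]].
   assert (A1 := HM1 x (proj1 (HM x Hx))). assert (A2 := HM1 (x+1) (proj1 (HM (x+1) ltac:(simpl; lra)))).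
   assert (A3 := HM2 eta (proj2 (HM eta ltac:(simpl; lra)))).
   rewrite Rminus_0_r in *. replace (x + 1 - x) with 1 in Hxi by ring.
   assert (Rabs (e' xi) < 2*eps/3).
   { rewrite <- (Rmult_1_r (e' xi)), <- Hxi. pose proof (Rabs_triang (e (x+1)) (- e x)). rewrite Rabs_Ropp in H. unfold Rminus in *. lra. }
   assert (Rabs (e'' eta * (xi - x)) <= Rabs (e'' eta)).
   { rewrite Rabs_mult. rewrite (Rabs_right (xi - x)) by lra. pose proof (Rabs_pos (e'' eta)). nra. }
   replace (e' x) with (e' xi - e'' eta * (xi - x)) by lra.
   pose proof (Rabs_triang (e' xi) (- (e'' eta * (xi - x)))) as HT. rewrite Rabs_Ropp in HT. unfold Rminus in *. lra.
 - exists M. intros x Hx. simpl in Hx.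
   destruct (MVT_cor2 e e' (x-1) x ltac:(lra) (fun c _ => H1 c)) as [xi [Hxi Hxir]].
   destruct (MVT_cor2 e' e'' xi x ltac:(lra) (fun c _ => H2 c)) as [eta [Heta Hetar]].
   assert (A1 := HM1 x (proj1 (HM x Hx))). assert (A2 := HM1 (x-1) (proj1 (HM (x-1) ltac:(simpl; lra)))).
   assert (A3 := HM2 eta (proj2 (HM eta ltac:(simpl; lra)))).
   rewrite Rminus_0_r in *. replace (x - (x - 1)) with 1 in Hxi by ring.
   assert (Rabs (e' xi) < 2*eps/3).
   { rewrite <- (Rmult_1_r (e' xi)), <- Hxi. pose proof (Rabs_triang (e x) (- e (x-1))). rewrite Rabs_Ropp in H. unfold Rminus in *. lra. }
   assert (Rabs (e'' eta * (x - xi)) <= Rabs (e'' eta)).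
   { rewrite Rabs_mult. rewrite (Rabs_right (x - xi)) by lra. pose proof (Rabs_pos (e'' eta)). nra. }
   replace (e' x) with (e' xi + e'' eta * (x - xi)) by lra.
   pose proof (Rabs_triang (e' xi) (e'' eta * (x - xi))). lra.
Qed.

Lemma tends_comb d f h g L B : tends d f 0 -> tends d h L -> (forall x, Rabs (g x) <= B) ->
  tends d (fun x => - h x * f x + (L - h x) * g x) 0.
Proof.
 intros Hf Hh Hg eps Heps.
 assert (HB : 0 <= B) by (eapply Rle_trans; [apply Rabs_pos|apply (Hg 0)]).
 set (A := Rabs L + 1).
 assert (HA : 0 < A) by (unfold A; pose proof (Rabs_pos L); lra).
 destruct (Hf (eps / (2 * A)) ltac:(apply Rdiv_lt_0_compat; lra)) as [M1 HM1].
 destruct (Hh (eps / (2 * (B+1))) ltac:(apply Rdiv_lt_0_compat; lra)) as [M2 HM2].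
 destruct (tends_bound d h L Hh) as [M3 HM3].
 destruct (near2 d M1 M2) as [M4 HM4]. destruct (near2 d M4 M3) as [M HM].
 exists M. intros x Hx. destruct (HM x Hx) as [Hx4 Hx3]. destruct (HM4 x Hx4) as [Hx1 Hx2].
 specialize (HM1 x Hx1). specialize (HM2 x Hx2). specialize (HM3 x Hx3). specialize (Hg x).
 rewrite Rminus_0_r in *.
 assert (E1 : Rabs (- h x * f x) <= A * (eps / (2*A))).
 { rewrite Rabs_mult, Rabs_Ropp. apply Rmult_le_compat; try apply Rabs_pos; fold A in HM3; lra. }
 assert (E2 : Rabs ((L - h x) * g x) <= (eps / (2 * (B+1))) * B).
 { rewrite Rabs_mult. rewrite Rabs_minus_sym. apply Rmult_le_compat; try apply Rabs_pos; lra. }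
 assert (E3 : A * (eps / (2*A)) = eps/2) by (field; lra).
 assert (E4 : (eps / (2 * (B+1))) * B < eps/2).
 { apply (Rmult_lt_reg_r (2*(B+1))); [lra|]. replace (eps / (2 * (B + 1)) * B * (2 * (B + 1))) with (eps * B) by (field; lra). nra. }
 pose proof (Rabs_triang (- h x * f x) ((L - h x) * g x)). lra.
Qed.

Lemma tends_ext d f g l : (forall x, f x = g x) -> tends d f l -> tends d g l.
Proof. intros H T eps He. destruct (T eps He) as [M HM]. exists M. intros. rewrite <- H. auto. Qed.

Lemma seq_to d f l (s : nat -> R) : (forall M, exists N, forall n, (n >= N)%nat -> near d M (s n)) ->
  tends d f l -> Un_cv (fun n => f (s n)) l.
Proof. intros Hs T eps He. destruct (T eps He) as [M HM]. destruct (Hs M) as [N HN].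
 exists N. intros n Hn. unfold Rdist. apply HM, HN; auto. Qed.

Lemma W_const u1 u2 du1 du2 k2 :
  (forall x, derivable_pt_lim u1 x (du1 x)) -> (forall x, derivable_pt_lim u2 x (du2 x)) ->
  (forall x, derivable_pt_lim du1 x (- (k2 x * u1 x))) -> (forall x, derivable_pt_lim du2 x (- (k2 x * u2 x))) ->
  forall x, u1 x * du2 x - u2 x * du1 x = u1 0 * du2 0 - u2 0 * du1 0.
Proof.
 intros h1 h2 h3 h4.
 set (w := fun x => u1 x * du2 x - u2 x * du1 x).
 assert (Hd : forall x, derivable_pt_lim w x 0).
 { intro x. eapply dpl_ext; [intro; reflexivity| |apply dpl_minus; apply dpl_mult; auto]. ring. }
 assert (Hc : forall a b, a < b -> w a = w b).
 { intros a b Hab. destruct (MVT_cor2 w (fun _ => 0) a b Hab (fun c _ => Hd c)) as [c [Hc _]]. lra. }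
 intro x. change (w x = w 0). destruct (Rtotal_order x 0) as [H|[H|H]]; [apply Hc; auto|subst; auto|symmetry; apply Hc; auto].
Qed.


Lemma du_asym d (k2 u du : R -> R) k A B :
  (forall x, derivable_pt_lim u x (du x)) -> (forall x, derivable_pt_lim du x (- (k2 x * u x))) ->
  tends d k2 (k^2) ->
  tends d (fun x => u x - (A * cos (k*x) + B * sin (k*x))) 0 ->
  tends d (fun x => du x - (- (A*k) * sin (k*x) + B*k * cos (k*x))) 0.
Proof.
 intros H1 H2 Hk He.
 apply (landau d (fun x => u x - (A * cos (k*x) + B * sin (k*x))) _
   (fun x => - k2 x * (u x - (A * cos (k*x) + B * sin (k*x))) + (k^2 - k2 x) * (A * cos (k*x) + B * sin (k*x)))).
 - intro x. eapply dpl_ext; [intro; reflexivity| |apply dpl_minus; [apply H1|apply dpl_plus; apply (dpl_mult (fun _ => _)); [apply dpl_const|apply dpl_cos|apply dpl_const|apply dpl_sin]]].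
   ring.
 - intro x. eapply dpl_ext; [intro; reflexivity| |apply dpl_minus; [apply H2|apply dpl_plus; apply (dpl_mult (fun _ => _)); [apply dpl_const|apply dpl_sin|apply dpl_const|apply dpl_cos]]].
   ring.
 - exact He.
 - apply (tends_comb d _ k2 _ (k^2) (Rabs A + Rabs B)); auto.
   intro x. eapply Rle_trans; [apply Rabs_triang|]. rewrite !Rabs_mult.
   pose proof (COS_bound (k*x)). pose proof (SIN_bound (k*x)).
   assert (Rabs (cos (k*x)) <= 1) by (apply Rabs_le; lra). assert (Rabs (sin (k*x)) <= 1) by (apply Rabs_le; lra).
   pose proof (Rabs_pos A); pose proof (Rabs_pos B); pose proof (Rabs_pos (cos (k*x))); pose proof (Rabs_pos (sin (k*x))). nra.
Qed.


Lemma deriv_mono f f' a b : a <= b -> (forall t, a <= t <= b -> derivable_pt_lim f t (f' t)) ->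
  (forall t, a <= t <= b -> 0 <= f' t) -> f a <= f b.
Proof. intros [Hab| <-] Hd Hp; [|lra].
 destruct (MVT_cor2 f f' a b Hab Hd) as [c [Hc Hcr]].
 assert (0 <= f' c * (b - a)) by (apply Rmult_le_pos; [apply Hp; lra|lra]). lra. Qed.

Lemma below_eq k2 D2 : below_part k2 D2 = fun x => (D2 - k2 x + Rabs (D2 - k2 x)) * / 2.
Proof. apply functional_extensionality; intro x. unfold below_part.
 destruct (Rlt_dec (k2 x) D2). rewrite Rabs_right by lra. field.
 rewrite Rabs_left1 by lra. field. Qed.

Lemma below_cont k2 D2 : continuity k2 -> continuity (below_part k2 D2).
Proof. intros Hc x. rewrite below_eq.
 assert (H1 : continuity_pt (fun y => D2 - k2 y) x) by exact (continuity_pt_minus (fun _ => D2) k2 x (continuity_pt_const (fun _ => D2) x (fun _ _ => eq_refl)) (Hc x)).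
 assert (H2 : continuity_pt (fun y => Rabs (D2 - k2 y)) x) by exact (continuity_pt_comp _ Rabs x H1 (Rcontinuity_abs _)).
 assert (H3 : continuity_pt (fun y => D2 - k2 y + Rabs (D2 - k2 y)) x) by exact (continuity_pt_plus _ _ x H1 H2).
 exact (continuity_pt_mult _ (fun _ => / 2) x H3 (continuity_pt_const (fun _ => / 2) x (fun _ _ => eq_refl))).
Qed.

Lemma below_nonneg k2 D2 x : 0 <= below_part k2 D2 x.
Proof. unfold below_part; destruct Rlt_dec; lra. Qed.

Lemma mono_lim_p (G : R -> R) M B : (forall x y, M <= x -> x <= y -> G x <= G y) -> (forall x, M <= x -> G x <= B) ->
  exists l, tends true G l.
Proof.
 intros Hm Hb. set (E := fun y => exists x, M <= x /\ y = G x).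
 assert (bE : bound E) by (exists B; intros y [x [Hx ->]]; auto).
 assert (nE : exists y, E y) by (exists (G M); exists M; split; [lra|auto]).
 destruct (completeness E bE nE) as [l [Hub Hlub]].
 exists l. intros eps He.
 assert (exists x, M <= x /\ l - eps < G x) as [x1 [Hx1 Hx1']].
 { apply NNPP. intro Hn. assert (l <= l - eps); [|lra]. apply Hlub. intros y [x [Hx ->]].
   destruct (Rle_dec (G x) (l - eps)); auto. exfalso; apply Hn; exists x; split; auto; lra. }
 exists x1. intros x Hx. simpl in Hx.
 assert (G x1 <= G x) by (apply Hm; auto). assert (G x <= l) by (apply Hub; exists x; split; [lra|auto]).
 apply Rabs_def1; lra.
Qed.

Lemma mono_lim_m (G : R -> R) M B : (forall x y, x <= y -> y <= M -> G x <= G y) -> (forall x, x <= M -> B <= G x) ->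
  exists l, tends false G l.
Proof.
 intros Hm Hb. set (E := fun y => exists x, x <= M /\ y = - G x).
 assert (bE : bound E) by (exists (-B); intros y [x [Hx ->]]; specialize (Hb x Hx); lra).
 assert (nE : exists y, E y) by (exists (- G M); exists M; split; [lra|auto]).
 destruct (completeness E bE nE) as [l [Hub Hlub]].
 exists (-l). intros eps He.
 assert (exists x, x <= M /\ l - eps < - G x) as [x1 [Hx1 Hx1']].
 { apply NNPP. intro Hn. assert (l <= l - eps); [|lra]. apply Hlub. intros y [x [Hx ->]].
   destruct (Rle_dec (- G x) (l - eps)); auto. exfalso; apply Hn; exists x; split; auto; lra. }
 exists x1. intros x Hx. simpl in Hx.
 assert (G x <= G x1) by (apply Hm; auto). assert (- G x <= l) by (apply Hub; exists x; split; [lra|auto]).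
 apply Rabs_def1; lra.
Qed.

Lemma is_integral_unique f a b v w : is_integral f a b v -> is_integral f a b w -> v = w.
Proof. intros [p1 H1] [p2 H2]. subst. apply RiemannInt_P5. Qed.

Lemma improper_exists k2 x0 kp km D G :
  continuity k2 ->
  integrable_near_pinf (fun x => k2 x - kp ^ 2) -> integrable_near_minf (fun x => k2 x - km ^ 2) ->
  (forall x y, x <= y -> y <= x0 -> k2 y <= k2 x) ->
  (forall x y, x0 <= x -> x <= y -> k2 x <= k2 y) ->
  D * D <= kp ^ 2 -> D * D <= km ^ 2 ->
  (forall t, derivable_pt_lim G t (below_part k2 (D*D) t)) ->
  (forall a b, is_integral (below_part k2 (D*D)) a b (G b - G a)) ->
  exists lp lm, tends true G lp /\ tends false G lm /\ improper_integral_R (below_part k2 (D*D)) (lp - lm).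
Proof.
 intros Hc [Mp [Lp Hp]] [Mm [Lm Hm]] hdec hinc Hkp Hkm HG HGi.
 assert (Gmono : forall x y, x <= y -> G x <= G y).
 { intros x y Hxy. apply (deriv_mono G (below_part k2 (D*D))); auto. intros; apply below_nonneg. }
 assert (Hcp : continuity (fun x => Rabs (k2 x - kp ^ 2))).
 { intro x. exact (continuity_pt_comp _ Rabs x (continuity_pt_minus k2 (fun _ => kp^2) x (Hc x) (continuity_pt_const (fun _ => kp^2) x (fun _ _ => eq_refl))) (Rcontinuity_abs _)). }
 destruct (prim_exists _ Hcp) as [Hp' [HHd HHi]].
 destruct (Hp 1 Rlt_0_1) as [Np HNp].
 set (Mp' := Rmax Mp x0).
 assert (Bp : forall b, Mp' <= b -> G b <= G Mp' + (Lp + 1)).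
 { intros b Hb. set (b' := Rmax b Np).
   destruct (HNp b' (Rmax_r _ _)) as [v [Hv Hvl]].
   assert (Hv' : v = Hp' b' - Hp' Mp) by (eapply is_integral_unique; [exact Hv|apply HHi]).
   assert (H1 : Hp' b - G b - (Hp' Mp' - G Mp') >= 0).
   { apply Rle_ge. apply Rge_le, Rge_minus, Rle_ge. apply (deriv_mono (fun t => Hp' t - G t) (fun t => Rabs (k2 t - kp^2) - below_part k2 (D*D) t)); auto.
     - intros t _. apply dpl_minus; auto.
     - intros t [Ht _]. assert (x0 <= t) by (eapply Rle_trans; [apply Rmax_r|exact Ht]).
       unfold below_part. destruct Rlt_dec.
       + pose proof (Rle_abs (- (k2 t - kp ^ 2))). rewrite Rabs_Ropp in H0. lra.
       + rewrite Rminus_0_r. apply Rabs_pos. }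
   assert (Hmono : forall x y, x <= y -> Hp' x <= Hp' y).
   { intros x y Hxy. apply (deriv_mono Hp' (fun x => Rabs (k2 x - kp ^ 2))); auto. intros; apply Rabs_pos. }
   assert (Hp' b <= Hp' b') by (apply Hmono, Rmax_l).
   assert (Hp' Mp <= Hp' Mp') by (apply Hmono, Rmax_l).
   apply Rabs_def2 in Hvl. lra. }
 destruct (mono_lim_p G Mp' (G Mp' + (Lp + 1))) as [lp Hlp]; [intros; apply Gmono; auto|exact Bp|].
 assert (Hcm : continuity (fun x => Rabs (k2 x - km ^ 2))).
 { intro x. exact (continuity_pt_comp _ Rabs x (continuity_pt_minus k2 (fun _ => km^2) x (Hc x) (continuity_pt_const (fun _ => km^2) x (fun _ _ => eq_refl))) (Rcontinuity_abs _)). }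
 destruct (prim_exists _ Hcm) as [Hm' [HMd HMi]].
 destruct (Hm 1 Rlt_0_1) as [Nm HNm].
 set (Mm' := Rmin Mm x0).
 assert (Bm : forall a, a <= Mm' -> G Mm' - (Lm + 1) <= G a).
 { intros a Ha. set (a' := Rmin a Nm).
   destruct (HNm a' (Rmin_r _ _)) as [v [Hv Hvl]].
   assert (Hv' : v = Hm' Mm - Hm' a') by (eapply is_integral_unique; [exact Hv|apply HMi]).
   assert (H1 : Hm' Mm' - G Mm' - (Hm' a - G a) >= 0).
   { apply Rle_ge. apply Rge_le, Rge_minus, Rle_ge. apply (deriv_mono (fun t => Hm' t - G t) (fun t => Rabs (k2 t - km^2) - below_part k2 (D*D) t)); auto.
     - intros t _. apply dpl_minus; auto.
     - intros t [_ Ht]. assert (t <= x0) by (eapply Rle_trans; [exact Ht|apply Rmin_r]).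
       unfold below_part. destruct Rlt_dec.
       + pose proof (Rle_abs (- (k2 t - km ^ 2))). rewrite Rabs_Ropp in H0. lra.
       + rewrite Rminus_0_r. apply Rabs_pos. }
   assert (Hmono : forall x y, x <= y -> Hm' x <= Hm' y).
   { intros x y Hxy. apply (deriv_mono Hm' (fun x => Rabs (k2 x - km ^ 2))); auto. intros; apply Rabs_pos. }
   assert (Hm' a' <= Hm' a) by (apply Hmono, Rmin_l).
   assert (Hm' Mm' <= Hm' Mm) by (apply Hmono, Rmin_l).
   apply Rabs_def2 in Hvl. lra. }
 destruct (mono_lim_m G Mm' (G Mm' - (Lm + 1))) as [lm Hlm]; [intros; apply Gmono; auto|exact Bm|].
 exists lp, lm. split; [exact Hlp|split; [exact Hlm|]].
 intros eps He. destruct (Hlp (eps/2) ltac:(lra)) as [M1 HM1]. destruct (Hlm (eps/2) ltac:(lra)) as [M2 HM2].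
 exists (Rmax (Rabs M1) (Rabs M2)). intros a b Ha Hb.
 exists (G b - G a). split; [apply HGi|].
 assert (near true M1 b). { simpl. pose proof (Rle_abs M1). pose proof (Rmax_l (Rabs M1) (Rabs M2)). lra. }
 assert (near false M2 a). { simpl. pose proof (Rle_abs (- M2)). rewrite Rabs_Ropp in H0. pose proof (Rmax_r (Rabs M1) (Rabs M2)). lra. }
 specialize (HM1 b H). specialize (HM2 a H0).
 apply Rabs_def2 in HM1. apply Rabs_def2 in HM2. apply Rabs_def1; lra.
Qed.


Lemma final_alg km kp D I t2 rho :
  0 < km -> 0 < kp -> 0 < D -> 0 <= rho ->
  kp * t2 = km * (1 - rho * rho) ->
  2 * km * ((1 + rho) * (1 + rho)) <= 2 * (kp * t2) * (km * kp / (D * D) * exp (I / D)) ->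
  (kp / km) * t2 >= (sech (/ 2 * ln (kp * km / D ^ 2) + / (2 * D) * I)) ^ 2.
Proof.
 intros Hkm Hkp HD Hr HW Hin.
 set (A := / 2 * ln (kp * km / D ^ 2) + / (2 * D) * I).
 set (K := km * kp / (D * D) * exp (I / D)).
 assert (HK0 : 0 < K) by (unfold K; apply Rmult_lt_0_compat; [unfold Rdiv; apply Rmult_lt_0_compat; [nra|apply Rinv_0_lt_compat; nra]|apply exp_pos]).
 assert (HyK : exp A * exp A = K).
 { rewrite <- exp_plus. unfold A, K.
   replace (/ 2 * ln (kp * km / D ^ 2) + / (2 * D) * I + (/ 2 * ln (kp * km / D ^ 2) + / (2 * D) * I))
     with (ln (kp * km / D ^ 2) + I / D) by (field; lra).
   rewrite exp_plus, exp_ln. replace (D^2) with (D*D) by ring. f_equal. field; lra.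
   unfold Rdiv; apply Rmult_lt_0_compat; [nra|apply Rinv_0_lt_compat; nra]. }
 set (y := exp A) in *. assert (Hy : 0 < y) by apply exp_pos.
 assert (Hs : sech A ^ 2 = 4 * K / ((K + 1) * (K + 1))).
 { unfold sech, cosh. fold y. rewrite exp_Ropp. fold y. rewrite <- HyK. field. split; [nra|lra]. }
 rewrite Hs.
 assert (HT : kp / km * t2 = 1 - rho * rho) by (replace (kp / km * t2) with ((kp*t2)/km) by (field; lra); rewrite HW; field; lra).
 rewrite HT. fold K in Hin. rewrite HW in Hin.
 assert (H1 : 1 + rho <= (1 - rho) * K).
 { assert (2 * km * (1 + rho) * ((1 + rho) - (1 - rho) * K) <= 0) by nra.
   assert (0 < 2 * km * (1 + rho)) by nra. nra. }
 assert (HK1 : 1 <= K) by nra.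
 assert (Hrho : rho * (K + 1) <= K - 1) by nra.
 apply Rle_ge. apply (Rmult_le_reg_r ((K+1)*(K+1))); [nra|].
 unfold Rdiv. rewrite Rmult_assoc, Rinv_l by nra. rewrite Rmult_1_r.
 assert (rho * (K + 1) * (rho * (K + 1)) <= (K - 1) * (K - 1)) by (apply Rmult_le_compat; nra).
 nra.
Qed.


Lemma dpl_cont f x l : derivable_pt_lim f x l -> continuity_pt f x.
Proof. intro H. exact (derivable_continuous_pt f x (exist _ l H)). Qed.

Lemma cv_ext (a b : nat -> R) l : (forall n, a n = b n) -> Un_cv a l -> Un_cv b l.
Proof. intros H C eps He. destruct (C eps He) as [N HN]. exists N. intros n Hn. rewrite <- H. auto. Qed.

Lemma cv_const c : Un_cv (fun _ => c) c.
Proof. intros eps He. exists 0%nat. intros. unfold Rdist. rewrite Rminus_diag, Rabs_R0. lra. Qed.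

Lemma cv_diff (a b : nat -> R) c : Un_cv (fun n => a n - b n) 0 -> (forall n, b n = c) -> Un_cv a c.
Proof. intros H Hb. apply (cv_ext (fun n => (a n - b n) + c)); [intro n; rewrite Hb; ring|].
 assert (Hc : Un_cv (fun n => (a n - b n) + c) (0 + c)) by (apply CV_plus; [exact H|apply cv_const]).
 rewrite Rplus_0_l in Hc. exact Hc. Qed.

Lemma cv_inv u l : Un_cv u l -> l <> 0 -> Un_cv (fun n => / u n) (/ l).
Proof. intros H Hl. exact (continuity_seq (/ id)%F u l (continuity_pt_inv id l (dpl_cont id l 1 (derivable_pt_lim_id l)) Hl) H). Qed.

Lemma cv_sqrt u l : Un_cv u l -> 0 <= l -> Un_cv (fun n => sqrt (u n)) (sqrt l).
Proof. intros H Hl. exact (continuity_seq sqrt u l (continuity_pt_sqrt l Hl) H). Qed.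

Lemma cv_exp u l : Un_cv u l -> Un_cv (fun n => exp (u n)) (exp l).
Proof. intros H. exact (continuity_seq exp u l (dpl_cont exp l _ (derivable_pt_lim_exp l)) H). Qed.

Lemma cv_Rmax u l c : Un_cv u l -> Un_cv (fun n => Rmax (u n) c) (Rmax l c).
Proof. intros H eps He. destruct (H eps He) as [N HN]. exists N. intros n Hn. specialize (HN n Hn).
 unfold Rdist in *. apply Rabs_def2 in HN. apply Rabs_def1; unfold Rmax; repeat destruct Rle_dec; lra. Qed.

Lemma cv_inv_nat : Un_cv (fun n => / (INR n + 1)) 0.
Proof. intros eps He. destruct (INR_unbounded (/ eps)) as [N HN]. exists N. intros n Hn. unfold Rdist.
 assert (INR N <= INR n) by (apply le_INR; lia). assert (0 < / eps) by (apply Rinv_0_lt_compat; lra).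
 rewrite Rminus_0_r, Rabs_right by (left; apply Rinv_0_lt_compat; pose proof (pos_INR n); lra).
 apply (Rmult_lt_reg_r (INR n + 1)); [pose proof (pos_INR n); lra|]. rewrite Rinv_l by (pose proof (pos_INR n); lra).
 apply (Rmult_lt_reg_l (/ eps)); [auto|]. rewrite <- Rmult_assoc, Rinv_l by lra. lra. Qed.

Lemma Psi_cv a b s e la lb ls : Un_cv a la -> Un_cv b lb -> Un_cv s ls -> Un_cv e 0 ->
  Un_cv (fun n => Psi (a n) (b n) (s n) (e n)) (la + lb + sqrt ((la - lb) * (la - lb) + 4 * (ls * ls) + 0)).
Proof. intros Ha Hb Hs He. unfold Psi. apply CV_plus; [apply CV_plus; auto|].
 apply cv_sqrt; [|pose proof (Rle_0_sqr (la - lb)); pose proof (Rle_0_sqr ls); unfold Rsqr in *; lra].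
 apply CV_plus; [apply CV_plus|auto]; [apply CV_mult; apply CV_minus; auto|apply CV_mult; [apply cv_const|apply CV_mult; auto]].
Qed.

Lemma exp_ineq a b c d D t : 0 < a -> 0 < b -> 0 < c -> 0 < d -> 0 < D ->
  ln a <= ln b + ln c + ln d - 2 * ln D + t -> a <= b * (c * (d * (/ (D * D) * exp t))).
Proof. intros Ha Hb Hc Hd HD H.
 assert (HX : 0 < b * (c * (d * (/ (D * D) * exp t)))).
 { repeat apply Rmult_lt_0_compat; auto. apply Rinv_0_lt_compat; nra. apply exp_pos. }
 destruct (Rle_dec a (b * (c * (d * (/ (D * D) * exp t))))) as [|Hn]; [auto|exfalso].
 apply Rnot_le_lt in Hn. apply ln_increasing in Hn; auto.
 rewrite !ln_mult, ln_Rinv, ln_mult, ln_exp in Hn; try lra; try nra; try apply exp_pos;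
 repeat (apply Rmult_lt_0_compat || apply Rinv_0_lt_compat); auto; try apply exp_pos; nra.
Qed.


Theorem mainTheorem8
  (k2 : R -> R) (kp km x0 Delta : R)
  (u1 u2 du1 du2 : R -> R) (rr ri tr ti : R)
  (hkp : 0 < kp) (hkm : 0 < km)
  (hcont : continuity k2)
  (hlimp : tends_pinf k2 (kp ^ 2)) (hlimm : tends_minf k2 (km ^ 2))
  (hintp : integrable_near_pinf (fun x => k2 x - kp ^ 2))
  (hintm : integrable_near_minf (fun x => k2 x - km ^ 2))
  (hdec : forall x y, x <= y -> y <= x0 -> k2 y <= k2 x)
  (hinc : forall x y, x0 <= x -> x <= y -> k2 x <= k2 y)
  (hD : 0 < Delta)
  (hD1 : k2 x0 <= Delta ^ 2)
  (hD2 : Delta ^ 2 <= Rmin (kp ^ 2) (km ^ 2))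
  (hu1 : forall x, derivable_pt_lim u1 x (du1 x))
  (hu2 : forall x, derivable_pt_lim u2 x (du2 x))
  (hdu1 : forall x, derivable_pt_lim du1 x (- (k2 x * u1 x)))
  (hdu2 : forall x, derivable_pt_lim du2 x (- (k2 x * u2 x)))
  (hasm1 : tends_minf (fun x => u1 x - (cos (km * x) + rr * cos (km * x) + ri * sin (km * x))) 0)
  (hasm2 : tends_minf (fun x => u2 x - (sin (km * x) + ri * cos (km * x) - rr * sin (km * x))) 0)
  (hasp1 : tends_pinf (fun x => u1 x - (tr * cos (kp * x) - ti * sin (kp * x))) 0)
  (hasp2 : tends_pinf (fun x => u2 x - (tr * sin (kp * x) + ti * cos (kp * x))) 0) :
  exists I : R,
    improper_integral_R (below_part k2 (Delta ^ 2)) I /\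
    (kp / km) * (tr ^ 2 + ti ^ 2) >=
      (sech (/ 2 * ln (kp * km / Delta ^ 2) + / (2 * Delta) * I)) ^ 2.
Proof.
 assert (HDD : Delta ^ 2 = Delta * Delta) by ring.
 assert (Hkp2 : Delta * Delta <= kp ^ 2) by (rewrite <- HDD; eapply Rle_trans; [exact hD2|apply Rmin_l]).
 assert (Hkm2 : Delta * Delta <= km ^ 2) by (rewrite <- HDD; eapply Rle_trans; [exact hD2|apply Rmin_r]).
 assert (hD1' : k2 x0 <= Delta * Delta) by lra.
 destruct (prim_exists (below_part k2 (Delta*Delta)) (below_cont k2 _ hcont)) as [G [HGd HGi]].
 destruct (improper_exists k2 x0 kp km Delta G hcont hintp hintm hdec hinc Hkp2 Hkm2 HGd HGi) as [lp [lm [Hlp [Hlm Himp]]]].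
 exists (lp - lm). split; [rewrite HDD; exact Himp|].
 destruct (INR_unbounded (Rabs x0 * kp + Rabs x0 * km)) as [N0 HN0].
 pose proof PI2_1 as HPI.
 set (tn := fun n : nat => 2 * INR (n + N0) * PI).
 set (q := fun n => tn n / kp). set (p := fun n => - tn n / km).
 assert (Hcos : forall n, cos (tn n) = 1).
 { intro n. unfold tn. rewrite <- (Rplus_0_l (2 * INR (n + N0) * PI)), cos_period. apply cos_0. }
 assert (Hsin : forall n, sin (tn n) = 0).
 { intro n. unfold tn. rewrite <- (Rplus_0_l (2 * INR (n + N0) * PI)), sin_period. apply sin_0. }
 assert (Hkq : forall n, kp * q n = tn n) by (intro; unfold q; field; lra).
 assert (Hkp' : forall n, km * p n = - tn n) by (intro; unfold p; field; lra).
 assert (Htn : forall n m, (m <= n + N0)%nat -> INR m <= tn n).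
 { intros n m Hm. unfold tn. apply le_INR in Hm. pose proof (pos_INR m). nra. }
 assert (Hx0a : Rabs x0 * kp < INR N0) by (pose proof (Rabs_pos x0); nra).
 assert (Hx0b : Rabs x0 * km < INR N0) by (pose proof (Rabs_pos x0); nra).
 assert (Hq0 : forall n, x0 <= q n).
 { intro n. pose proof (Htn n N0 ltac:(lia)). unfold q. pose proof (Rle_abs x0).
   apply (Rmult_le_reg_r kp); auto. unfold Rdiv; rewrite Rmult_assoc, Rinv_l by lra. nra. }
 assert (Hp0 : forall n, p n <= x0).
 { intro n. pose proof (Htn n N0 ltac:(lia)). unfold p. pose proof (Rle_abs (- x0)) as Hx. rewrite Rabs_Ropp in Hx.
   apply (Rmult_le_reg_r km); auto. unfold Rdiv; rewrite Rmult_assoc, Rinv_l by lra. nra. }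
 assert (Hqdiv : forall M, exists N, forall n, (n >= N)%nat -> near true M (q n)).
 { intro M. destruct (INR_unbounded (Rabs M * kp)) as [N HN]. exists N. intros n Hn. simpl.
   pose proof (Htn n N ltac:(lia)). pose proof (Rle_abs M). pose proof (Rabs_pos M). unfold q.
   apply (Rmult_le_reg_r kp); auto. unfold Rdiv; rewrite Rmult_assoc, Rinv_l by lra. nra. }
 assert (Hpdiv : forall M, exists N, forall n, (n >= N)%nat -> near false M (p n)).
 { intro M. destruct (INR_unbounded (Rabs M * km)) as [N HN]. exists N. intros n Hn. simpl.
   pose proof (Htn n N ltac:(lia)). pose proof (Rle_abs (- M)) as HM'. rewrite Rabs_Ropp in HM'. pose proof (Rabs_pos M). unfold p.
   apply (Rmult_le_reg_r km); auto. unfold Rdiv; rewrite Rmult_assoc, Rinv_l by lra. nra. }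
 assert (A1 : tends true (fun x => u1 x - (tr * cos (kp * x) + - ti * sin (kp * x))) 0).
 { apply (tends_ext true (fun x => u1 x - (tr * cos (kp * x) - ti * sin (kp * x)))); [intro; ring|exact hasp1]. }
 assert (A2 : tends true (fun x => u2 x - (ti * cos (kp * x) + tr * sin (kp * x))) 0).
 { apply (tends_ext true (fun x => u2 x - (tr * sin (kp * x) + ti * cos (kp * x)))); [intro; ring|exact hasp2]. }
 assert (A3 : tends false (fun x => u1 x - ((1 + rr) * cos (km * x) + ri * sin (km * x))) 0).
 { apply (tends_ext false (fun x => u1 x - (cos (km * x) + rr * cos (km * x) + ri * sin (km * x)))); [intro; ring|exact hasm1]. }
 assert (A4 : tends false (fun x => u2 x - (ri * cos (km * x) + (1 - rr) * sin (km * x))) 0).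
 { apply (tends_ext false (fun x => u2 x - (sin (km * x) + ri * cos (km * x) - rr * sin (km * x)))); [intro; ring|exact hasm2]. }
 pose proof (du_asym true k2 u1 du1 kp _ _ hu1 hdu1 hlimp A1) as B1.
 pose proof (du_asym true k2 u2 du2 kp _ _ hu2 hdu2 hlimp A2) as B2.
 pose proof (du_asym false k2 u1 du1 km _ _ hu1 hdu1 hlimm A3) as B3.
 pose proof (du_asym false k2 u2 du2 km _ _ hu2 hdu2 hlimm A4) as B4.
 assert (Lu1q : Un_cv (fun n => u1 (q n)) tr).
 { apply (cv_diff _ (fun n => tr * cos (kp * q n) + - ti * sin (kp * q n))); [exact (seq_to true _ 0 q Hqdiv A1)|].
   intro n. rewrite Hkq, Hcos, Hsin. ring. }
 assert (Lu2q : Un_cv (fun n => u2 (q n)) ti).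
 { apply (cv_diff _ (fun n => ti * cos (kp * q n) + tr * sin (kp * q n))); [exact (seq_to true _ 0 q Hqdiv A2)|].
   intro n. rewrite Hkq, Hcos, Hsin. ring. }
 assert (Ldu1q : Un_cv (fun n => du1 (q n)) (- (ti * kp))).
 { apply (cv_diff _ (fun n => - (tr * kp) * sin (kp * q n) + - ti * kp * cos (kp * q n))); [exact (seq_to true _ 0 q Hqdiv B1)|].
   intro n. rewrite Hkq, Hcos, Hsin. ring. }
 assert (Ldu2q : Un_cv (fun n => du2 (q n)) (tr * kp)).
 { apply (cv_diff _ (fun n => - (ti * kp) * sin (kp * q n) + tr * kp * cos (kp * q n))); [exact (seq_to true _ 0 q Hqdiv B2)|].
   intro n. rewrite Hkq, Hcos, Hsin. ring. }
 assert (Lu1p : Un_cv (fun n => u1 (p n)) (1 + rr)).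
 { apply (cv_diff _ (fun n => (1 + rr) * cos (km * p n) + ri * sin (km * p n))); [exact (seq_to false _ 0 p Hpdiv A3)|].
   intro n. rewrite Hkp', cos_neg, sin_neg, Hcos, Hsin. ring. }
 assert (Lu2p : Un_cv (fun n => u2 (p n)) ri).
 { apply (cv_diff _ (fun n => ri * cos (km * p n) + (1 - rr) * sin (km * p n))); [exact (seq_to false _ 0 p Hpdiv A4)|].
   intro n. rewrite Hkp', cos_neg, sin_neg, Hcos, Hsin. ring. }
 assert (Ldu1p : Un_cv (fun n => du1 (p n)) (ri * km)).
 { apply (cv_diff _ (fun n => - ((1 + rr) * km) * sin (km * p n) + ri * km * cos (km * p n))); [exact (seq_to false _ 0 p Hpdiv B3)|].
   intro n. rewrite Hkp', cos_neg, sin_neg, Hcos, Hsin. ring. }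
 assert (Ldu2p : Un_cv (fun n => du2 (p n)) ((1 - rr) * km)).
 { apply (cv_diff _ (fun n => - (ri * km) * sin (km * p n) + (1 - rr) * km * cos (km * p n))); [exact (seq_to false _ 0 p Hpdiv B4)|].
   intro n. rewrite Hkp', cos_neg, sin_neg, Hcos, Hsin. ring. }

 assert (Lk2q : Un_cv (fun n => k2 (q n)) (kp ^ 2)) by exact (seq_to true k2 _ q Hqdiv hlimp).
 assert (Lk2p : Un_cv (fun n => k2 (p n)) (km ^ 2)) by exact (seq_to false k2 _ p Hpdiv hlimm).
 assert (Lphq : Un_cv (fun n => phi k2 Delta (q n)) kp).
 { pose proof (cv_sqrt _ _ (cv_Rmax _ _ (Delta * Delta) Lk2q) ltac:(apply (Rle_trans _ _ _ (Rle_trans _ _ _ (Rle_0_sqr Delta) Hkp2)), Rmax_l)) as H.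
   assert (E : sqrt (Rmax (kp^2) (Delta*Delta)) = kp) by (rewrite Rmax_left by lra; replace (kp^2) with (kp*kp) by ring; apply sqrt_square; lra).
   rewrite E in H. exact H. }
 assert (Lphp : Un_cv (fun n => phi k2 Delta (p n)) km).
 { pose proof (cv_sqrt _ _ (cv_Rmax _ _ (Delta * Delta) Lk2p) ltac:(apply (Rle_trans _ _ _ (Rle_trans _ _ _ (Rle_0_sqr Delta) Hkm2)), Rmax_l)) as H.
   assert (E : sqrt (Rmax (km^2) (Delta*Delta)) = km) by (rewrite Rmax_left by lra; replace (km^2) with (km*km) by ring; apply sqrt_square; lra).
   rewrite E in H. exact H. }
 assert (LGq : Un_cv (fun n => G (q n)) lp) by exact (seq_to true G lp q Hqdiv Hlp).
 assert (LGp : Un_cv (fun n => G (p n)) lm) by exact (seq_to false G lm p Hpdiv Hlm).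
 pose proof (W_const u1 u2 du1 du2 k2 hu1 hu2 hdu1 hdu2) as HW.
 assert (HWq : u1 0 * du2 0 - u2 0 * du1 0 = tr * (tr * kp) - ti * (- (ti * kp))).
 { apply (UL_sequence (fun n => u1 (q n) * du2 (q n) - u2 (q n) * du1 (q n))).
   - apply (cv_ext (fun _ => u1 0 * du2 0 - u2 0 * du1 0)); [intro; symmetry; apply HW|apply cv_const].
   - apply CV_minus; apply CV_mult; auto. }
 assert (HWp : u1 0 * du2 0 - u2 0 * du1 0 = (1 + rr) * ((1 - rr) * km) - ri * (ri * km)).
 { apply (UL_sequence (fun n => u1 (p n) * du2 (p n) - u2 (p n) * du1 (p n))).
   - apply (cv_ext (fun _ => u1 0 * du2 0 - u2 0 * du1 0)); [intro; symmetry; apply HW|apply cv_const].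
   - apply CV_minus; apply CV_mult; auto. }
 set (e := fun n : nat => / (INR n + 1)).
 assert (He : forall n, 0 < e n) by (intro n; unfold e; apply Rinv_0_lt_compat; pose proof (pos_INR n); lra).
 assert (Hphi : forall x, 0 < phi k2 Delta x) by (intro x; pose proof (phi_ge k2 Delta x hD); lra).
 assert (Hineq : forall n, PsiC u1 u2 du1 du2 (phi k2 Delta (p n)) (e n) (p n) <=
     PsiC u1 u2 du1 du2 (phi k2 Delta (q n)) (e n) (q n) * (phi k2 Delta (p n) * (phi k2 Delta (q n) *
       (/ (Delta * Delta) * exp ((G (q n) - G (p n)) / Delta))))).
 { intro n. apply exp_ineq; auto; try apply PsiC_pos; auto.
   apply (core k2 u1 u2 du1 du2 G x0 Delta (e n) (p n) (q n)); auto. }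
 set (la := ((ri * km) * (ri * km) + ((1 - rr) * km) * ((1 - rr) * km)) * / km).
 set (lb := km * ((1 + rr) * (1 + rr) + ri * ri)).
 set (ls := (1 + rr) * (ri * km) + ri * ((1 - rr) * km)).
 set (la' := ((- (ti * kp)) * (- (ti * kp)) + (tr * kp) * (tr * kp)) * / kp).
 set (lb' := kp * (tr * tr + ti * ti)).
 set (ls' := tr * (- (ti * kp)) + ti * (tr * kp)).
 assert (L1 : Un_cv (fun n => PsiC u1 u2 du1 du2 (phi k2 Delta (p n)) (e n) (p n))
                (la + lb + sqrt ((la - lb) * (la - lb) + 4 * (ls * ls) + 0))).
 { unfold PsiC, Nf, Sf, Rdiv. apply Psi_cv; [| | |apply cv_inv_nat].
   - apply CV_mult; [apply CV_plus; apply CV_mult; auto|apply cv_inv; [auto|lra]].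
   - apply CV_mult; [auto|apply CV_plus; apply CV_mult; auto].
   - apply CV_plus; apply CV_mult; auto. }
 assert (L2 : Un_cv (fun n => PsiC u1 u2 du1 du2 (phi k2 Delta (q n)) (e n) (q n) * (phi k2 Delta (p n) * (phi k2 Delta (q n) *
       (/ (Delta * Delta) * exp ((G (q n) - G (p n)) / Delta)))))
       ((la' + lb' + sqrt ((la' - lb') * (la' - lb') + 4 * (ls' * ls') + 0)) * (km * (kp * (/ (Delta * Delta) * exp ((lp - lm) / Delta)))))).
 { apply CV_mult; [|apply CV_mult; [auto|apply CV_mult; [auto|apply CV_mult; [apply cv_const|]]]].
   - unfold PsiC, Nf, Sf, Rdiv. apply Psi_cv; [| | |apply cv_inv_nat].
     + apply CV_mult; [apply CV_plus; apply CV_mult; auto|apply cv_inv; [auto|lra]].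
     + apply CV_mult; [auto|apply CV_plus; apply CV_mult; auto].
     + apply CV_plus; apply CV_mult; auto.
   - apply cv_exp. unfold Rdiv. apply CV_mult; [apply CV_minus; auto|apply cv_const]. }
 pose proof (Rle_cv_lim Hineq L1 L2) as Hlim.
 set (rho := sqrt (rr * rr + ri * ri)).
 assert (Hrho2 : rho * rho = rr * rr + ri * ri) by (apply sqrt_sqrt; nra).
 assert (Hrho0 : 0 <= rho) by apply sqrt_pos.
 assert (E1 : la + lb + sqrt ((la - lb) * (la - lb) + 4 * (ls * ls) + 0) = 2 * km * ((1 + rho) * (1 + rho))).
 { assert (Hs : (la - lb) * (la - lb) + 4 * (ls * ls) + 0 = (4 * km) * (4 * km) * (rr * rr + ri * ri))
     by (unfold la, lb, ls; field; lra).
   rewrite Hs, sqrt_mult_alt, sqrt_square by nra. fold rho.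
   assert (Ha : la = km * (ri * ri + (1 - rr) * (1 - rr))) by (unfold la; field; lra).
   rewrite Ha. unfold lb.
   replace (2 * km * ((1 + rho) * (1 + rho))) with (2 * km * (1 + rho * rho) + 4 * km * rho) by ring.
   rewrite Hrho2. ring. }
 assert (E2 : la' + lb' + sqrt ((la' - lb') * (la' - lb') + 4 * (ls' * ls') + 0) = 2 * (kp * (tr ^ 2 + ti ^ 2))).
 { assert (Hs : (la' - lb') * (la' - lb') + 4 * (ls' * ls') + 0 = 0) by (unfold la', lb', ls'; field; lra).
   rewrite Hs, sqrt_0. unfold la', lb'. field. lra. }
 rewrite E1, E2 in Hlim.
 apply (final_alg km kp Delta (lp - lm) (tr ^ 2 + ti ^ 2) rho); auto.
 - rewrite Hrho2. nra.
 - replace (2 * (kp * (tr ^ 2 + ti ^ 2)) * (km * kp / (Delta * Delta) * exp ((lp - lm) / Delta)))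
     with (2 * (kp * (tr ^ 2 + ti ^ 2)) * (km * (kp * (/ (Delta * Delta) * exp ((lp - lm) / Delta))))) by (field; lra).
   exact Hlim.
Qed.
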